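(* Let $0<\delta<\tfrac12$, $|\nu|<1-2\delta$, $|\mu|<1$, and let $m\ge1$. Set $\delta_1=\frac{2\delta}{1+\nu}$ and $\delta_4=\frac{2\delta}{1-\nu}$. Then $$\frac{1}{|\log(1-\delta)|}>\frac{1}{|\log(1-\delta_1)|}+\frac{1}{|\log(1-\delta_4)|},$$ and consequently $$\frac{\log\big[\frac m2(1+\mu)\big]}{|\log(1-\delta_1)|}+\frac{\log\big[\frac m2(1-\mu)\big]}{|\log(1-\delta_4)|}<\frac{\log m}{|\log(1-\delta)|}.$$
   Context: $\log$ is the natural logarithm. The left-hand side of the second inequality is the sum of the bounds $\log(\#\text{rows})/|\log(1-\text{density})|$ applied separately to the two diagonal blocks of a perfectly block-diagonal $0$-$1$ matrix whose diagonal blocks have $\frac m2(1\pm\mu)$ rows, $\frac n2(1\pm\nu)$ columns and row densities $\delta_1,\delta_4$, while the right-hand side is the same bound for the whole matrix with density $\delta$. *)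

(* Defs.v *)
From Stdlib Require Export Reals.
Open Scope R_scope.

(* Main.v *)
Require Import Defs.
From Stdlib Require Import Reals Lra.
From Coquelicot Require Import Coquelicot.
Open Scope R_scope.

Lemma ln_upper (t : R) : 1 < t -> ln t < t - 1.
Proof.
  intro H. rewrite <- (ln_exp (t - 1)). apply ln_increasing; [lra|].
  pose proof (exp_ineq1 (t-1)). lra.
Qed.

Lemma ln_lower (t : R) : 1 < t -> 2 * (t - 1) / (t + 1) < ln t.
Proof.
  intro H.
  destruct (MVT_cor2 (fun u => ln u - 2 * (u - 1) / (u + 1))
    (fun u => / u - 4 / (u + 1) ^ 2) 1 t H) as [c [Hc Hc2]].
  { intros c Hc. apply is_derive_Reals. auto_derive.
    - split; [lra|]. split; [|auto]. intro; lra.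
    - field. split; lra. }
  rewrite ln_1 in Hc.
  assert (P : 0 < / c - 4 / (c + 1) ^ 2).
  { replace (/ c - 4 / (c + 1) ^ 2) with ((c - 1)^2 / (c * (c+1)^2)) by (field; lra).
    apply Rdiv_lt_0_compat. nra. apply Rmult_lt_0_compat; nra. }
  assert (0 < (/ c - 4 / (c + 1) ^ 2) * (t - 1)) by nra.
  replace (2 * (1 - 1) / (1 + 1)) with 0 in Hc by field. lra.
Qed.

Lemma key (x : R) : 0 < x < 1 ->
  0 < Rabs (ln (1 - x)) /\
  / x - 1 < 1 / Rabs (ln (1 - x)) /\ 1 / Rabs (ln (1 - x)) < / x - / 2.
Proof.
  intro H.
  set (t := / (1 - x)).
  assert (Ht : 1 < t). { unfold t. rewrite <- Rinv_1. apply Rinv_lt_contravar; lra. }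
  assert (E : Rabs (ln (1 - x)) = ln t).
  { unfold t. rewrite ln_Rinv by lra. rewrite Rabs_left; [lra|].
    rewrite <- ln_1. apply ln_increasing; lra. }
  rewrite E.
  pose proof (ln_upper t Ht) as U. pose proof (ln_lower t Ht) as L.
  assert (Et : t - 1 = x / (1 - x)) by (unfold t; field; lra).
  assert (Et2 : 2 * (t - 1) / (t + 1) = 2 * x / (2 - x)) by (unfold t; field; lra).
  rewrite Et in U. rewrite Et2 in L.
  assert (Hp : 0 < 2 * x / (2 - x)) by (apply Rdiv_lt_0_compat; lra).
  split; [lra|]. split.
  - replace (/ x - 1) with (1 / (x / (1 - x))) by (field; lra).
    unfold Rdiv in *. rewrite !Rmult_1_l. apply Rinv_lt_contravar; [|lra].
    apply Rmult_lt_0_compat; lra.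
  - replace (/ x - / 2) with (1 / (2 * x / (2 - x))) by (field; lra).
    unfold Rdiv in *. rewrite !Rmult_1_l. apply Rinv_lt_contravar; [|lra].
    apply Rmult_lt_0_compat; lra.
Qed.

Theorem mainTheorem7 (delta nu mu : R) (m : nat) :
  0 < delta -> delta < 1 / 2 ->
  Rabs nu < 1 - 2 * delta ->
  Rabs mu < 1 ->
  (1 <= m)%nat ->
  let delta1 := 2 * delta / (1 + nu) in
  let delta4 := 2 * delta / (1 - nu) in
  1 / Rabs (ln (1 - delta)) > 1 / Rabs (ln (1 - delta1)) + 1 / Rabs (ln (1 - delta4))
  /\
  ln (INR m / 2 * (1 + mu)) / Rabs (ln (1 - delta1))
    + ln (INR m / 2 * (1 - mu)) / Rabs (ln (1 - delta4))
    < ln (INR m) / Rabs (ln (1 - delta)).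
Proof.
  intros H0 H1 Hn Hm Hm1 d1 d4.
  apply Rabs_def2 in Hn. apply Rabs_def2 in Hm.
  assert (A1 : 0 < d1 < 1).
  { unfold d1. split. apply Rdiv_lt_0_compat; lra.
    apply (Rmult_lt_reg_r (1 + nu)); [lra|]. unfold Rdiv. rewrite Rmult_assoc, Rinv_l; lra. }
  assert (A4 : 0 < d4 < 1).
  { unfold d4. split. apply Rdiv_lt_0_compat; lra.
    apply (Rmult_lt_reg_r (1 - nu)); [lra|]. unfold Rdiv. rewrite Rmult_assoc, Rinv_l; lra. }
  assert (Hid : / d1 + / d4 = / delta) by (unfold d1, d4; field; lra).
  destruct (key delta ltac:(lra)) as [P0 [K0 _]].
  destruct (key d1 A1) as [P1 [_ K1]].
  destruct (key d4 A4) as [P4 [_ K4]].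
  set (C := 1 / Rabs (ln (1 - delta))) in *.
  set (A := 1 / Rabs (ln (1 - d1))) in *.
  set (B := 1 / Rabs (ln (1 - d4))) in *.
  assert (Main : C > A + B) by lra.
  split; [exact Main|].
  assert (HA : 0 < A) by (unfold A; apply Rdiv_lt_0_compat; lra).
  assert (HB : 0 < B) by (unfold B; apply Rdiv_lt_0_compat; lra).
  assert (Hmr : 1 <= INR m) by (apply (le_INR 1); exact Hm1).
  assert (Lm : 0 <= ln (INR m)) by (rewrite <- ln_1; apply Rcomplements.ln_le; lra).
  assert (La : ln ((1 + mu) / 2) < 0) by (rewrite <- ln_1; apply ln_increasing; lra).
  assert (Lb : ln ((1 - mu) / 2) < 0) by (rewrite <- ln_1; apply ln_increasing; lra).
  replace (INR m / 2 * (1 + mu)) with (INR m * ((1 + mu) / 2)) by field.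
  replace (INR m / 2 * (1 - mu)) with (INR m * ((1 - mu) / 2)) by field.
  rewrite !ln_mult by lra.
  replace (ln (INR m) / Rabs (ln (1 - delta))) with (ln (INR m) * C) by (unfold C; field; lra).
  replace ((ln (INR m) + ln ((1 + mu) / 2)) / Rabs (ln (1 - d1))) with
    ((ln (INR m) + ln ((1 + mu) / 2)) * A) by (unfold A; field; lra).
  replace ((ln (INR m) + ln ((1 - mu) / 2)) / Rabs (ln (1 - d4))) with
    ((ln (INR m) + ln ((1 - mu) / 2)) * B) by (unfold B; field; lra).
  nra.
Qed.
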